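(* Assume the setup of the context, in particular $N_j=\tilde N-n_j$. Let \[ D_1(N)=s_0^{2N-1}\prod_{p\mid s_0}p^{\nu_p(N-1)}\times\prod_{j=1}^m\Big\{\prod_{p\mid v_j}p^{\nu_p(n_j)}\prod_{p\nmid s_j}p^{M_p(r_j+(n_0+1)s_j)}\Big\}, \] \[ D_2(N)=\Big(\frac{d}{(d,s_0)}\Big)^{\tilde N}\prod_{p\mid s}p^{\nu_p(\tilde N)}\times\prod_p p^{M_p(U+V\tilde N)}, \] (products over primes $p$) and $D(N)=D_1(N)D_2(N)$. Then $D(N)Q_i(z)\in\mathbb{Z}[z]$ and $D(N)P_{ij}(z)\in\mathbb{Z}[z]$ for all $i=0,1,\dots,m$, $j=1,\dots,m$.
   Context: Let $m\ge1$ and let $\alpha_0,\alpha_1,\dots,\alpha_m$ be positive rational numbers with $\alpha_i-\alpha_j\notin\mathbb{Z}$ for $1\le i<j\le m$. Pochhammer symbol: $(x)_0=1$, $(x)_n=x(x+1)\cdots(x+n-1)$. Let $\varphi_j(z)=\sum_{n\ge0}\frac{(\alpha_j)_n}{(\alpha_j+\alpha_0)_n}z^n$. Write $\alpha_j=r_j/s_j$ ($j=0,\dots,m$) and $\alpha_j+\alpha_0=u_j/v_j$ ($j=1,\dots,m$) with positive integers, $\gcd(r_j,s_j)=\gcd(u_j,v_j)=1$; $R=\max_{1\le j\le m} r_j$, $S=\max s_j$, $U=\max u_j$, $V=\max v_j$; $d_j$ is the positive integer with $s_0s_j=d_jv_j$; $s,v,d$ are the least common multiples of $s_j$, $v_j$,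 $d_j$ ($j=1,\dots,m$) respectively; $\tilde d=d/\gcd(d,s_0)$. For $x>0$ and a prime $p$, $M_p(x)=\lfloor \log x/\log p\rfloor$ (so $p^{M_p(x)}=1$ for $p>x$), and $\nu_p(n)=\sum_{t\ge1}\lfloor n/p^t\rfloor$. Padé setup: let $n_1,\dots,n_m$ be positive integers, $N=n_1+\cdots+n_m$, $n_0\ge\max\{n_1,\dots,n_m\}$ an integer, $\tilde N=N+n_0$, and $N_j=\tilde N-n_j$. For $i=0,\dots,m$ and $\delta_{ij}$ the Kronecker delta, $Q_i(z)=\sum_{k=0}^Na_{ik}z^k$ with $a_{iN}=1$ and for $k=0,\dots,N-1$ \[ a_{i,N-k-1}=\sum_{\ell=k}^{N-1}(-1)^{\ell+1}\frac{(\alpha_0-1)_{\ell-k}}{(\ell-k)!}\frac{(\alpha_0+\ell+1)_{N-\ell-1}}{(N-\ell-1)!}\prod_{j=1}^m\frac{(\alpha_j+\alpha_0+n_0-n_j+\delta_{ij}+\ell+1)_{n_j}}{(\alpha_j+n_0-n_j+\delta_{ij}+1)_{n_j}}, \] and $P_{ij}(z)=\sum_{\mu=0}^{N_j+\delta_{ij}}c_{ij\mu}z^\mu$, $c_{ij\mu}=\sum_{k=0}^{\min\{N,\mu\}}a_{ik}\frac{(\alpha_j)_{\mu-k}}{(\alpha_j+\alpha_0)_{\mu-k}}$. *)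

(* Defs.v *)
From HB Require Import structures.
From mathcomp Require Import all_boot all_order all_algebra.
Set Implicit Arguments. Unset Strict Implicit. Unset Printing Implicit Defensive.
Import Order.TTheory GRing.Theory Num.Theory.

Local Open Scope ring_scope.

Definition poch (x : rat) (k : nat) : rat := \prod_(i < k) (x + i%:R).

Definition qnum (a : rat) : nat := `|numq a|%N.
Definition qden (a : rat) : nat := `|denq a|%N.

(* nu_p(n) = sum_{t>=1} floor(n/p^t)  (terms with t > n vanish for p >= 2) *)
Definition nu (p n : nat) : nat := (\sum_(1 <= t < n.+1) n %/ p ^ t)%N.

Definition Mp (p x : nat) : nat := trunc_log p x.

Definition Ntot (m : nat) (n : nat -> nat) : nat := (\sum_(1 <= j < m.+1) n j)%N.
Definition Ntil (m : nat) (n : nat -> nat) : nat := (Ntot m n + n 0%N)%N.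

Definition r_ (alpha : nat -> rat) j := qnum (alpha j).
Definition s_ (alpha : nat -> rat) j := qden (alpha j).
Definition u_ (alpha : nat -> rat) j := qnum (alpha j + alpha 0%N).
Definition v_ (alpha : nat -> rat) j := qden (alpha j + alpha 0%N).
(* d_j : the positive integer with s_0 s_j = d_j v_j *)
Definition d_ (alpha : nat -> rat) j := ((s_ alpha 0 * s_ alpha j) %/ v_ alpha j)%N.

Definition Umax m alpha : nat := (\max_(1 <= j < m.+1) u_ alpha j)%N.
Definition Vmax m alpha : nat := (\max_(1 <= j < m.+1) v_ alpha j)%N.
Definition slcm m alpha : nat := (\big[lcmn/1]_(1 <= j < m.+1) s_ alpha j)%N.
Definition dlcm m alpha : nat := (\big[lcmn/1]_(1 <= j < m.+1) d_ alpha j)%N.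
Definition dtil m alpha : nat := (dlcm m alpha %/ gcdn (dlcm m alpha) (s_ alpha 0))%N.

(* products over primes p of p^{M_p(x)}; factors with p > x are 1 *)
Definition D1 (m : nat) (alpha : nat -> rat) (n : nat -> nat) : nat :=
  let N := Ntot m n in
  let s0 := s_ alpha 0 in
  (s0 ^ (2 * N - 1)
   * (\prod_(p < s0.+1 | prime p && (p %| s0)) p ^ nu p (N - 1))
   * \prod_(1 <= j < m.+1)
       ((\prod_(p < (v_ alpha j).+1 | prime p && (p %| v_ alpha j)) p ^ nu p (n j))
        * \prod_(p < (r_ alpha j + (n 0 + 1) * s_ alpha j).+1
                   | prime p && ~~ (p %| s_ alpha j))
            p ^ Mp p (r_ alpha j + (n 0 + 1) * s_ alpha j)))%N.

Definition D2 (m : nat) (alpha : nat -> rat) (n : nat -> nat) : nat :=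
  let Nt := Ntil m n in
  let s := slcm m alpha in
  let X := (Umax m alpha + Vmax m alpha * Nt)%N in
  (dtil m alpha ^ Nt
   * (\prod_(p < s.+1 | prime p && (p %| s)) p ^ nu p Nt)
   * \prod_(p < X.+1 | prime p) p ^ Mp p X)%N.

Definition DN m alpha n : nat := (D1 m alpha n * D2 m alpha n)%N.

Definition coefa (m : nat) (alpha : nat -> rat) (n : nat -> nat) (i k : nat) : rat :=
  let N := Ntot m n in
  if k == N then 1 else
  let kk := (N - k).-1 in
  \sum_(kk <= l < N)
    (-1) ^+ l.+1
    * (poch (alpha 0%N - 1) (l - kk) / (l - kk)`!%:R)
    * (poch (alpha 0%N + l.+1%:R) (N - l - 1) / (N - l - 1)`!%:R)
    * \prod_(1 <= j < m.+1)
        (poch (alpha j + alpha 0%N + (n 0%N)%:R - (n j)%:R + (i == j)%:R + l%:R + 1) (n j)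
         / poch (alpha j + (n 0%N)%:R - (n j)%:R + (i == j)%:R + 1) (n j)).

Definition Qpoly m alpha n (i : nat) : {poly rat} :=
  \poly_(k < (Ntot m n).+1) coefa m alpha n i k.

Definition coefc m alpha n (i j mu : nat) : rat :=
  \sum_(0 <= k < (minn (Ntot m n) mu).+1)
    coefa m alpha n i k * (poch (alpha j) (mu - k) / poch (alpha j + alpha 0%N) (mu - k)).

Definition Ppoly m alpha n (i j : nat) : {poly rat} :=
  \poly_(mu < (Ntil m n - n j + (i == j)).+1) coefc m alpha n i j mu.

(* Main.v *)
Require Import Defs.
From HB Require Import structures.
From mathcomp Require Import all_boot all_order all_algebra.
From mathcomp Require Import zify ring.
Import Order.TTheory GRing.Theory Num.Theory.
Set Implicit Arguments. Unset Strict Implicit. Unset Printing Implicit Defensive.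

Section part1.

Lemma nuE p n : prime p -> nu p n = logn p n`!.
Proof. by move=> pp; rewrite /nu logn_fact. Qed.

Lemma dvdn_fact_le a b : a <= b -> a`! %| b`!.
Proof.
move=> ab; rewrite -(bin_fact ab) mulnA; apply: dvdn_mulr; exact: dvdn_mull.
Qed.

Lemma nu_add p a b c : prime p -> a + b <= c -> nu p a + nu p b <= nu p c.
Proof.
move=> pp abc; rewrite !nuE // -lognM ?fact_gt0 //.
apply: dvdn_leq_log; first exact: fact_gt0.
apply: dvdn_trans (dvdn_fact_le abc).
have := bin_fact (leq_addr b a); rewrite addKn => <-; exact: dvdn_mull.
Qed.

Lemma nu_le p a b : prime p -> a <= b -> nu p a <= nu p b.
Proof. by move=> pp ab; rewrite !nuE //; apply: dvdn_leq_log (fact_gt0 _) (dvdn_fact_le ab). Qed.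

Lemma logn_bigprod_ge p B (P : pred nat) (e : nat -> nat) :
  prime p -> p < B -> P p ->
  e p <= logn p (\prod_(q < B | prime q && P q) q ^ e q).
Proof.
move=> pp pB Pp.
have gt0 : 0 < \prod_(q < B | prime q && P q) q ^ e q.
  by apply: prodn_cond_gt0 => q /andP[/prime_gt0 q0 _]; rewrite expn_gt0 q0.
rewrite -pfactor_dvdn //.
rewrite (bigD1 (Ordinal pB)) /=; last by rewrite pp Pp.
exact: dvdn_mulr.
Qed.

Lemma dvdn_bigprod I (r : seq I) (P : pred I) (F G : I -> nat) :
  (forall i, P i -> F i %| G i) ->
  \prod_(i <- r | P i) F i %| \prod_(i <- r | P i) G i.
Proof.
move=> H; elim/big_rec2: _ => // i a b Pi ab; exact: dvdn_mul (H _ Pi) ab.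
Qed.

Lemma trunc_log_small p X : 1 < p -> X < p -> trunc_log p X = 0.
Proof.
move=> p1 Xp; case: (posnP X) => [->|X0]; first exact: trunc_log0.
have := trunc_logP p1 X0; case: (trunc_log p X) => // k.
rewrite expnS => h; have : p <= X.
  by apply: leq_trans h; rewrite leq_pmulr // expn_gt0 (ltnW p1).
by rewrite leqNgt Xp.
Qed.

Lemma prod_consec b t : \prod_(i < t) (b.+1 + i) * b`! = (b + t)`!.
Proof.
elim: t => [|t IH]; first by rewrite big_ord0 mul1n addn0.
by rewrite big_ord_recr /= mulnAC IH addnS factS mulnC addSn.
Qed.

Lemma fact_dvd_consec b t : t`! %| \prod_(i < t) (b.+1 + i).
Proof.
have := bin_fact (leq_addl b t); rewrite addnK -prod_consec mulnA => /eqP.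
rewrite eqn_mul2r (negbTE (lt0n_neq0 (fact_gt0 b))) /= => /eqP <-.
exact: dvdn_mull.
Qed.

End part1.

Section part2.
Local Open Scope ring_scope.

Lemma Posz_prod t (f : nat -> nat) : Posz (\prod_(i < t) f i)%N = \prod_(i < t) Posz (f i).
Proof.
elim: t => [|t IH]; first by rewrite !big_ord0.
by rewrite !big_ord_recr /= PoszM IH.
Qed.

Lemma dvdz_prod_diff (q : int) t (F G : nat -> int) :
  (forall i, (i < t)%N -> (q %| F i - G i)%Z) ->
  (q %| \prod_(i < t) F i - \prod_(i < t) G i)%Z.
Proof.
elim: t => [|t IH] H; first by rewrite !big_ord0 subrr dvdz0.
rewrite !big_ord_recr /=.
have -> : (\prod_(i<t) F i) * F t - (\prod_(i<t) G i) * G t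
   = (\prod_(i<t) F i - \prod_(i<t) G i) * F t + (\prod_(i<t) G i) * (F t - G t) by ring.
apply: rpredD; first by apply: dvdz_mulr; apply: IH => i it; apply: H; exact: ltnW.
by apply: dvdz_mull; apply: H.
Qed.

Lemma L1int p (A : int) (s t : nat) : prime p -> ~~ (p %| s)%N ->
  ((p ^ nu p t)%:Z %| \prod_(i < t) (A + (i * s)%:Z))%Z.
Proof.
move=> pp ps.
set k := nu p t; set q : int := (p ^ k)%:Z.
have qpos : (0 < p ^ k)%N by rewrite expn_gt0 prime_gt0.
have q0 : q != 0 by rewrite /q -[0]/(Posz 0) eqz_nat -lt0n.
have [u [v E]] := Bezoutz (s%:Z) q.
have cop : coprime s (p ^ k) by rewrite coprimeXr // coprime_sym prime_coprime.
have {cop} E1 : u * s%:Z + v * q = 1 by rewrite E /gcdz /= (eqP cop).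
set w := ((A * u) %% q)%Z.
have w0 : 0 <= w by apply: modz_ge0.
set kk := ((A * u) %/ q)%Z.
have wE : w = A * u - kk * q by rewrite /w /kk {2}(divz_eq (A * u) q) addrC addKr.
set b : nat := (`|w| + p ^ k)%N.
have bE : b%:Z = w + q.
    by rewrite /b PoszD abszE ger0_norm.
have b0 : (0 < b)%N by rewrite /b addn_gt0 qpos orbT.
pose G i := s%:Z * (b + i)%:Z.
have key : forall i : nat, (q %| (A + (i * s)%:Z) - G i)%Z.
  move=> i; apply/dvdzP; exists (A * v - s%:Z + s%:Z * kk).
  rewrite /G PoszD PoszM bE wE.
  transitivity (A * (1 - (u * s%:Z + v * q)) + (A * v - s%:Z + s%:Z * kk) * q); first by ring.
  by rewrite E1 subrr mulr0 add0r.
have dG : (q %| \prod_(i < t) G i)%Z.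
  rewrite /G big_split /=; apply: dvdz_mull.
  rewrite -Posz_prod /q dvdzE /=.
  rewrite /k nuE //; apply: dvdn_trans (pfactor_dvdnn p t`!) _.
  by rewrite -(prednK b0); apply: fact_dvd_consec.
have := @dvdz_prod_diff q t (fun i => A + (i * s)%:Z) G (fun i _ => key i).
move=> h; have -> : \prod_(i < t) (A + (i * s)%:Z) = (\prod_(i < t) (A + (i * s)%:Z) - \prod_(i < t) G i) + \prod_(i < t) G i by rewrite subrK.
exact: rpredD.
Qed.

Lemma L1nat p b w t : prime p -> ~~ (p %| w)%N ->
  (p ^ nu p t %| \prod_(i < t) (b + i * w))%N.
Proof.
move=> pp pw; have := L1int (b%:Z) t pp pw.
rewrite (eq_bigr (fun i : 'I_t => Posz (b + i * w)%N)) // -(@Posz_prod t (fun i => (b + i * w)%N)).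
by rewrite dvdzE.
Qed.

End part2.

Section part3.

Lemma count_mult (q a s t : nat) : 0 < q -> coprime q s ->
  #|[set i : 'I_t | q %| a + i * s]| <= t %/ q + 1.
Proof.
move=> q0 cop.
pose f (i : 'I_t) : 'I_(t %/ q).+1 := inord (i %/ q).
have lt (i : 'I_t) : i %/ q < (t %/ q).+1 by rewrite ltnS leq_div2r // ltnW.
have inj : {in [set i : 'I_t | q %| a + i * s] &, injective f}.
  move=> i j; rewrite !inE => hi hj /(congr1 val); rewrite /f /= !inordK // => eqd.
  apply: val_inj => /=.
  wlog ij : i j hi hj eqd / (j <= i).
    move=> H; case: (leqP j i) => h; first exact: H.
    by symmetry; apply: H => //; exact: ltnW.
  have : q %| (i - j) * s by rewrite mulnBl -(subnDl a) dvdn_sub.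
  rewrite Gauss_dvdl // => dq.
  have ei := divn_eq i q; have ej := divn_eq j q.
  have mi := ltn_pmod i q0; have mj := ltn_pmod j q0.
  case: (posnP (i - j)) => h; first by lia.
  have := dvdn_leq h dq; rewrite eqd in ei. lia.
rewrite -(card_in_imset inj) addn1.
apply: leq_trans (max_card _) _; by rewrite card_ord.
Qed.

Lemma logn_prod p t (F : nat -> nat) : (forall i, i < t -> 0 < F i) ->
  logn p (\prod_(i < t) F i) = \sum_(i < t) logn p (F i).
Proof.
elim: t => [|t IH] H; first by rewrite !big_ord0 logn1.
have Hp : 0 < \prod_(i < t) F i.
  by apply: prodn_cond_gt0 => i _; apply: H; apply: ltnW (ltn_ord i).
rewrite !big_ord_recr /= lognM ?H // IH // => i it; apply: H; exact: ltnW.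
Qed.

Lemma sum_lt L M : \sum_(e < M) (e < L) = minn L M.
Proof. elim: M => [|M IH]; first by rewrite big_ord0 minn0. rewrite big_ord_recr /= IH. lia. Qed.

Lemma logn_as_sum p x X : prime p -> 0 < x <= X ->
  logn p x = \sum_(e < trunc_log p X) (p ^ e.+1 %| x).
Proof.
move=> pp /andP[x0 xX].
have LM : logn p x <= trunc_log p X.
  apply: trunc_log_max; first exact: prime_gt1.
  by apply: leq_trans xX; apply: dvdn_leq => //; apply: pfactor_dvdnn.
transitivity (\sum_(e < trunc_log p X) nat_of_bool (e < logn p x)).
  rewrite sum_lt; lia.
by apply: eq_bigr => e _; rewrite pfactor_dvdn.
Qed.

Lemma sum_bool_card t (P : pred nat) :
  \sum_(i < t) (P i : nat) = #|[set i : 'I_t | P i]|.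
Proof.
rewrite -sum1_card [RHS]big_mkcond /=; apply: eq_bigr => i _; rewrite inE; by case: (P i).
Qed.

Lemma sum_trunc (g : nat -> nat) M n : (forall e, n <= e -> g e = 0) ->
  \sum_(0 <= e < M) g e <= \sum_(0 <= e < n) g e.
Proof.
move=> H; case: (leqP M n) => h.
  by rewrite (big_cat_nat (leq0n M) h) /= leq_addr.
rewrite (big_cat_nat (leq0n n) (ltnW h)) /= [X in _ + X <= _]big1_seq ?addn0 //.
by move=> e /andP[_]; rewrite mem_index_iota => /andP[ne _]; apply: H.
Qed.

Lemma L2 p a s t X : prime p -> ~~ (p %| s) ->
  (forall i, i < t -> 0 < a + i * s <= X) ->
  logn p (\prod_(i < t) (a + i * s)) <= nu p t + trunc_log p X.
Proof.
move=> pp ps H.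
set M := trunc_log p X.
rewrite (@logn_prod p t (fun i => a + i * s)); last by move=> i it; case/andP: (H i it).
rewrite (eq_bigr (fun i : 'I_t => \sum_(e < M) (p ^ e.+1 %| a + i * s))); last first.
  by move=> i _; apply: logn_as_sum => //; apply: H.
rewrite exchange_big /=.
rewrite (eq_bigr (fun e : 'I_M => #|[set i : 'I_t | p ^ e.+1 %| a + i * s]|)); last first.
  by move=> e _; rewrite (sum_bool_card t (fun i => p ^ e.+1 %| a + i * s)).
apply: leq_trans (_ : \sum_(e < M) (t %/ p ^ e.+1 + 1) <= _).
  apply: leq_sum => e _; apply: count_mult; first by rewrite expn_gt0 prime_gt0.
  by rewrite coprime_pexpl // prime_coprime.
rewrite big_split /= sum_nat_const card_ord muln1 leq_add2r.
have nuE' : nu p t = \sum_(0 <= e < t) t %/ p ^ e.+1.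
  rewrite /nu -[1%N]add0n big_addn subn1 /=.
  by apply: eq_bigr => e _; rewrite addn1.
rewrite nuE' -(big_mkord xpredT (fun e => t %/ p ^ e.+1)).
apply: sum_trunc => e te; apply: divn_small.
apply: leq_ltn_trans te _; apply: ltn_trans (ltn_expl _ (prime_gt1 pp)).
by [].
Qed.

End part3.

Section part4.

Lemma DIVL (a s b w t X W : nat) :
  0 < a -> 0 < b -> 0 < W -> coprime a s ->
  (forall i, i < t -> a + i * s <= X) ->
  (forall p, prime p -> ~~ (p %| s) -> p %| w -> nu p t + trunc_log p X <= logn p W) ->
  (forall p, prime p -> ~~ (p %| s) -> ~~ (p %| w) -> trunc_log p X <= logn p W) ->
  \prod_(i < t) (a + i * s) %| W * \prod_(i < t) (b + i * w).
Proof.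
move=> a0 b0 W0 cop HX H1 H2.
have D0 : 0 < \prod_(i < t) (a + i * s) by apply: prodn_cond_gt0 => i _; rewrite addn_gt0 a0.
have N0 : 0 < \prod_(i < t) (b + i * w) by apply: prodn_cond_gt0 => i _; rewrite addn_gt0 b0.
apply/dvdn_partP => // p; rewrite mem_primes => /and3P[pp _ pD].
rewrite p_part pfactor_dvdn ?muln_gt0 ?W0 // lognM //.
case ps: (p %| s).
  rewrite (@logn_prod p t (fun i => a + i * s)); last by move=> i _; rewrite addn_gt0 a0.
  rewrite big1 // => i _; apply: logn_coprime; rewrite prime_coprime //.
  apply/negP => pa; have : p %| gcdn a s.
    rewrite dvdn_gcd ps andbT.
    have pis : p %| i * s by apply: dvdn_mull; rewrite ps.
    by rewrite -(dvdn_addl a pis).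
  by rewrite (eqP cop) dvdn1 => /eqP p1; move: (prime_gt1 pp); rewrite p1.
have L : logn p (\prod_(i < t) (a + i * s)) <= nu p t + trunc_log p X.
  by apply: L2 => // [|i it]; [rewrite ps | rewrite addn_gt0 a0 /=; exact: HX].
case pw: (p %| w).
  by apply: leq_trans L _; apply: leq_trans (H1 p pp (negbT ps) pw) _; exact: leq_addr.
have LN : nu p t <= logn p (\prod_(i < t) (b + i * w)).
  by rewrite -pfactor_dvdn //; apply: L1nat => //; rewrite pw.
apply: leq_trans L _; rewrite [X in _ <= X]addnC; apply: leq_add => //; apply: H2 => //; by rewrite ?ps ?pw.
Qed.

End part4.

Section part5.
Local Open Scope ring_scope.

Definition dint (D : nat) (x : rat) := (D%:R * x) \is a Num.int.

Lemma dint_mul D1 D2 x y : dint D1 x -> dint D2 y -> dint (D1 * D2) (x * y).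
Proof. rewrite /dint natrM => h1 h2; rewrite mulrACA; exact: rpredM. Qed.

Lemma dint_dvd D1 D2 x : (D1 %| D2)%N -> dint D1 x -> dint D2 x.
Proof.
move=> /dvdnP[k ->] h; rewrite /dint natrM -mulrA; apply: rpredM => //; exact: rpred_nat.
Qed.

Lemma dint_sum D (I : eqType) (r : seq I) (P : pred I) (F : I -> rat) :
  (forall i, i \in r -> P i -> dint D (F i)) -> dint D (\sum_(i <- r | P i) F i).
Proof.
move=> H; rewrite /dint big_seq_cond mulr_sumr; apply: rpred_sum => i /andP[ir Pi].
exact: H.
Qed.

Lemma dint_prod (I : eqType) (r : seq I) (P : pred I) (E : I -> nat) (F : I -> rat) :
  (forall i, i \in r -> P i -> dint (E i) (F i)) ->
  dint (\prod_(i <- r | P i) E i) (\prod_(i <- r | P i) F i).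
Proof.
move=> H; rewrite big_seq_cond [X in dint _ X]big_seq_cond.
elim/big_rec2: _; first by rewrite /dint mulr1 rpred1.
by move=> i a b /andP[ir Pi] h; apply: dint_mul => //; exact: H.
Qed.

Lemma dint_int x : x \is a Num.int -> dint 1 x.
Proof. by rewrite /dint mul1r. Qed.

Lemma Qint_dvdn (a b : nat) : (b %| a)%N -> (a%:R / b%:R : rat) \is a Num.int.
Proof.
move=> /dvdnP[k ->]; case: (posnP b) => [->|b0]; first by rewrite invr0 mulr0.
by rewrite natrM mulfK ?rpred_nat // pnatr_eq0 -lt0n.
Qed.

Lemma posz_intr (n : nat) : ((Posz n)%:~R : rat) = n%:R.
Proof. by []. Qed.

Lemma poch_frac (A : int) (s c t : nat) : (0 < s)%N ->
  poch (A%:~R / s%:R + c%:R) t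
  = (\prod_(i < t) (A + Posz ((c + i) * s)))%:~R / (s ^ t)%:R.
Proof.
move=> s0; rewrite /poch rmorph_prod natrX.
have -> : (s%:R ^+ t) = \prod_(i < t) (s%:R : rat) by rewrite prodr_const card_ord.
rewrite -prodf_div.
apply: eq_bigr => i _; rewrite rmorphD /= posz_intr natrM natrD.
have : (s%:R : rat) != 0 by rewrite pnatr_eq0 -lt0n.
by move=> h; field.
Qed.

Lemma poch_fracN (a s c t : nat) : (0 < s)%N ->
  poch (a%:R / s%:R + c%:R) t
  = (\prod_(i < t) (a + (c + i) * s))%N%:R / (s ^ t)%:R.
Proof.
move=> s0; rewrite -posz_intr poch_frac //; congr (_ / _).
by rewrite -posz_intr; congr intmul; rewrite (@Posz_prod t (fun i => (a + (c+i) * s)%N)).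
Qed.

Lemma qrepr (x : rat) : 0 < x ->
  [/\ x = (qnum x)%:R / (qden x)%:R, (0 < qnum x)%N, (0 < qden x)%N &
      coprime (qnum x) (qden x)].
Proof.
move=> x0; have n0 : 0 < numq x by rewrite numq_gt0.
have d0 := denq_gt0 x.
split; last exact: coprime_num_den.
- by rewrite /qnum /qden !natr_absz !gtr0_norm // divq_num_den.
- by rewrite /qnum absz_gt0 gt_eqF.
- by rewrite /qden absz_gt0 gt_eqF.
Qed.

End part5.

Section part6.
Local Open Scope ring_scope.

Definition Kp (s t : nat) : nat := (\prod_(p < s.+1 | prime p && (p %| s)) p ^ nu p t)%N.

Lemma Kp_gt0 s t : (0 < Kp s t)%N.
Proof. by apply: prodn_cond_gt0 => q /andP[/prime_gt0 q0 _]; rewrite expn_gt0 q0. Qed.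

Lemma R1 (A : int) (s c t : nat) : (0 < s)%N ->
  dint (s ^ t * Kp s t) (poch (A%:~R / s%:R + c%:R) t / t`!%:R).
Proof.
move=> s0; rewrite /dint poch_frac //.
set P := \prod_(i < t) _.
have h1 : ((s ^ t)%:R : rat) != 0 by rewrite pnatr_eq0 -lt0n expn_gt0 s0.
have h2 : ((t`!)%:R : rat) != 0 by rewrite pnatr_eq0 -lt0n fact_gt0.
have -> : ((s ^ t * Kp s t)%N%:R * (P%:~R / (s ^ t)%:R / t`!%:R) : rat)
   = ((Kp s t)%:Z * P)%:~R / (t`!%:Z)%:~R.
  by rewrite intrM !posz_intr natrM; field; rewrite h1 h2.
apply: (@Qint_dvdz (Posz (Kp s t) * P) (Posz t`!)); rewrite dvdzE abszM /=.
case: (posnP `|P|%N) => [->|P0]; first by rewrite muln0 dvdn0.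
apply/dvdn_partP; first exact: fact_gt0.
move=> p; rewrite mem_primes => /and3P[pp _ _].
rewrite p_part -nuE //.
case ps: (p %| s)%N.
  apply: dvdn_mulr; rewrite pfactor_dvdn ?Kp_gt0 //.
  apply: (@logn_bigprod_ge p s.+1 (fun q => q %| s)%N (fun q => nu q t)) => //.
  by rewrite ltnS dvdn_leq.
apply: dvdn_mull.
have -> : P = \prod_(i < t) ((A + Posz (c * s)) + Posz (i * s)%N).
  by apply: eq_bigr => i _; rewrite mulnDl PoszD addrA.
have := L1int (A + Posz (c * s)) t pp (negbT ps).
by rewrite dvdzE.
Qed.

End part6.

Section part7.

Lemma Mlow p X (P : pred nat) : prime p -> P p ->
  trunc_log p X <= logn p (\prod_(q < X.+1 | prime q && P q) q ^ Mp q X).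
Proof.
move=> pp Pp; case: (leqP p X) => h.
  by apply: (@logn_bigprod_ge p X.+1 P (fun q => Mp q X)).
by rewrite trunc_log_small ?prime_gt1.
Qed.

Lemma Mlow' p X : prime p ->
  trunc_log p X <= logn p (\prod_(q < X.+1 | prime q) q ^ Mp q X).
Proof.
move=> pp; rewrite (eq_bigl (fun q : 'I_X.+1 => prime q && true)) => [|q]; last by rewrite andbT.
exact: (@Mlow p X xpredT).
Qed.

Lemma bigprod_pos B (P : pred nat) (e : nat -> nat) :
  0 < \prod_(q < B | prime q && P q) q ^ e q.
Proof. by apply: prodn_cond_gt0 => q /andP[/prime_gt0 q0 _]; rewrite expn_gt0 q0. Qed.

Lemma bigprod_pos' B (e : nat -> nat) : 0 < \prod_(q < B | prime q) q ^ e q.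
Proof. by apply: prodn_cond_gt0 => q /prime_gt0 q0; rewrite expn_gt0 q0. Qed.

Local Open Scope ring_scope.

Lemma Cgen (r s u v s0 c l n n0 : nat) :
  (0 < r)%N -> (0 < s)%N -> (0 < u)%N -> (0 < v)%N -> coprime r s ->
  (v %| s0 * s)%N -> (forall i, i < n -> c + i <= n0 + 1)%N ->
  dint (s0 ^ n * ((\prod_(p < v.+1 | prime p && (p %| v)) p ^ nu p n)
          * \prod_(p < (r + (n0 + 1) * s).+1 | prime p && ~~ (p %| s))
               p ^ Mp p (r + (n0 + 1) * s)))%N
    (poch (u%:R / v%:R + (c + l)%N%:R) n / poch (r%:R / s%:R + c%:R) n).
Proof.
move=> r0 s0' u0 v0 crs vs cb.
set X := (r + (n0 + 1) * s)%N.
set V1 := (\prod_(p < v.+1 | _) _)%N.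
set M1 := (\prod_(p < X.+1 | _) _)%N.
have V0 : (0 < V1)%N by apply: prodn_cond_gt0 => q /andP[/prime_gt0 q0 _]; rewrite expn_gt0 q0.
have M0 : (0 < M1)%N by apply: prodn_cond_gt0 => q /andP[/prime_gt0 q0 _]; rewrite expn_gt0 q0.
rewrite !poch_fracN //.
set Pn := (\prod_(i < n) _)%N; set Pd := (\prod_(i < n) _)%N.
have Pd0 : (0 < Pd)%N by apply: prodn_cond_gt0 => i _; rewrite addn_gt0 r0.
have h1 : ((v ^ n)%:R : rat) != 0 by rewrite pnatr_eq0 -lt0n expn_gt0 v0.
have h2 : ((s ^ n)%:R : rat) != 0 by rewrite pnatr_eq0 -lt0n expn_gt0 s0'.
have h3 : (Pd%:R : rat) != 0 by rewrite pnatr_eq0 -lt0n.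
rewrite /dint.
have -> : ((s0 ^ n * (V1 * M1))%N%:R * (Pn%:R / (v ^ n)%:R / (Pd%:R / (s ^ n)%:R)) : rat)
   = ((s0 ^ n * s ^ n) * ((V1 * M1) * Pn))%N%:R / (v ^ n * Pd)%N%:R.
  by rewrite !natrM; field; rewrite h1 h2 h3.
apply: Qint_dvdn; apply: dvdn_mul; first by rewrite -expnMn dvdn_exp2r.
have -> : Pd = \prod_(i < n) ((r + c * s) + i * s)%N.
  by apply: eq_bigr => i _; rewrite mulnDl addnA.
have -> : Pn = \prod_(i < n) ((u + (c + l) * v) + i * v)%N.
  by apply: eq_bigr => i _; rewrite mulnDl addnA.
apply: (@DIVL _ _ _ _ _ X).
- by rewrite addn_gt0 r0.
- by rewrite addn_gt0 u0.
- by rewrite muln_gt0 V0 M0.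
- by rewrite /coprime gcdnC addnC gcdnMDl gcdnC.
- move=> i ilt; rewrite /X -addnA leq_add2l -mulnDl leq_mul2r.
  by rewrite (cb i ilt) orbT.
- move=> p pp ps pv; rewrite lognM //; apply: leq_add.
    apply: (@logn_bigprod_ge p v.+1 (fun q => q %| v)%N (fun q => nu q n)) => //.
    by rewrite ltnS dvdn_leq.
  by apply: (@Mlow p X (fun q => ~~ (q %| s))%N).
- move=> p pp ps pv; rewrite lognM //; apply: leq_trans (leq_addl _ _).
  by apply: (@Mlow p X (fun q => ~~ (q %| s))%N).
Qed.

Lemma Rgen (r s u v dt S N t U V : nat) :
  (0 < r)%N -> (0 < s)%N -> (0 < u)%N -> (0 < v)%N -> coprime u v ->
  (s %| dt * v)%N -> (t <= N)%N -> (u <= U)%N -> (v <= V)%N ->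
  (s %| S)%N -> (0 < S)%N ->
  dint (dt ^ N * (\prod_(p < S.+1 | prime p && (p %| S)) p ^ nu p N)
          * \prod_(p < (U + V * N).+1 | prime p) p ^ Mp p (U + V * N))%N
    (poch (r%:R / s%:R) t / poch (u%:R / v%:R) t).
Proof.
move=> r0 s0 u0 v0 cuv sdv tN uU vV sS S0.
set X := (U + V * N)%N.
set K2 := (\prod_(p < S.+1 | _) _)%N.
set M2 := (\prod_(p < X.+1 | _) _)%N.
have K0 : (0 < K2)%N by apply: prodn_cond_gt0 => q /andP[/prime_gt0 q0 _]; rewrite expn_gt0 q0.
have M0 : (0 < M2)%N by apply: prodn_cond_gt0 => q /prime_gt0 q0; rewrite expn_gt0 q0.
rewrite -[r%:R / s%:R]addr0 -[u%:R / v%:R]addr0 -[0 : rat]/(0%N%:R).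
rewrite !poch_fracN //.
set Pr := (\prod_(i < t) _)%N; set Pu := (\prod_(i < t) _)%N.
have Pu0 : (0 < Pu)%N by apply: prodn_cond_gt0 => i _; rewrite addn_gt0 u0.
have h1 : ((v ^ t)%:R : rat) != 0 by rewrite pnatr_eq0 -lt0n expn_gt0 v0.
have h2 : ((s ^ t)%:R : rat) != 0 by rewrite pnatr_eq0 -lt0n expn_gt0 s0.
have h3 : (Pu%:R : rat) != 0 by rewrite pnatr_eq0 -lt0n.
rewrite /dint.
have -> : ((dt ^ N * K2 * M2)%N%:R * (Pr%:R / (s ^ t)%:R / (Pu%:R / (v ^ t)%:R)) : rat)
   = ((dt ^ N * v ^ t) * ((K2 * M2) * Pr))%N%:R / (s ^ t * Pu)%N%:R.
  by rewrite !natrM; field; rewrite h1 h2 h3.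
apply: Qint_dvdn; apply: dvdn_mul.
  apply: dvdn_trans (_ : (dt * v) ^ t %| _)%N; first by rewrite dvdn_exp2r.
  by rewrite expnMn dvdn_mul // dvdn_exp2l.
have -> : Pu = \prod_(i < t) (u + i * v)%N by apply: eq_bigr => i _; rewrite add0n.
have -> : Pr = \prod_(i < t) (r + i * s)%N by apply: eq_bigr => i _; rewrite add0n.
apply: (@DIVL _ _ _ _ _ X) => //.
- by rewrite muln_gt0 K0 M0.
- move=> i ilt; rewrite /X leq_add // [X in (X <= _)%N]mulnC leq_mul //.
  by apply: leq_trans (ltnW ilt) tN.
- move=> p pp pv ps; rewrite lognM //; apply: leq_add; last exact: Mlow'.
  apply: leq_trans (nu_le pp tN) _.
  apply: (@logn_bigprod_ge p S.+1 (fun q => q %| S)%N (fun q => nu q N)) => //.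
    by rewrite ltnS dvdn_leq // (dvdn_trans ps sS).
  exact: dvdn_trans ps sS.
- by move=> p pp ps pw; rewrite lognM //; apply: leq_trans (leq_addl _ _); exact: Mlow'.
Qed.

End part7.

Section part8.

Lemma dvdn_biglcm_nat (F : nat -> nat) a b j : a <= j < b ->
  F j %| \big[lcmn/1%N]_(a <= i < b) F i.
Proof. by move=> h; rewrite (big_rem j) ?mem_index_iota //=; exact: dvdn_lcml. Qed.

Lemma biglcm_gt0 (F : nat -> nat) a b : (forall i, a <= i < b -> 0 < F i) ->
  0 < \big[lcmn/1%N]_(a <= i < b) F i.
Proof.
move=> H; rewrite big_seq; apply: (big_ind (fun x => 0 < x)) => //.
  by move=> x y x0 y0; rewrite lcmn_gt0 x0 y0.
by move=> i; rewrite mem_index_iota => /H.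
Qed.

Lemma leq_bigmax_nat (F : nat -> nat) a b j : a <= j < b -> F j <= \max_(a <= i < b) F i.
Proof. by move=> h; apply: leq_bigmax_seq => //; rewrite mem_index_iota. Qed.

Local Open Scope ring_scope.

Lemma vdiv (x y : rat) : 0 < x -> 0 < y -> (qden (x + y) %| qden y * qden x)%N.
Proof.
move=> x0 y0.
have [ex rp sp crs] := qrepr x0.
have [ey r0p s0p _] := qrepr y0.
have [exy up vp cuv] := qrepr (addr_gt0 x0 y0).
set r := qnum x in ex rp crs *; set s := qden x in ex sp crs *.
set r0 := qnum y in ey r0p *; set s0 := qden y in ey s0p *.
set u := qnum (x + y) in exy up cuv *; set v := qden (x + y) in exy vp cuv *.
have hs : (s%:R : rat) != 0 by rewrite pnatr_eq0 -lt0n.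
have hs0 : (s0%:R : rat) != 0 by rewrite pnatr_eq0 -lt0n.
have hv : (v%:R : rat) != 0 by rewrite pnatr_eq0 -lt0n.
have Eu : (u%:R : rat) = (r%:R / s%:R + r0%:R / s0%:R) * v%:R.
  by rewrite -ex -ey exy divfK.
have E : (u * (s0 * s))%N = ((r * s0 + r0 * s) * v)%N.
  apply/eqP; rewrite -(eqr_nat rat) !natrM natrD !natrM Eu; apply/eqP; field.
  by rewrite hs hs0.
have : (v %| u * (s0 * s))%N by rewrite E dvdn_mull.
by rewrite Gauss_dvdr // coprime_sym.
Qed.

Lemma coefa_dint m alpha n i k :
  (forall j, (j <= m)%N -> 0 < alpha j) ->
  (forall j, (1 <= j <= m)%N -> (0 < n j)%N) ->
  (forall j, (1 <= j <= m)%N -> (n j <= n 0)%N) ->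
  dint (D1 m alpha n) (coefa m alpha n i k).
Proof.
move=> ha hn hn0.
rewrite /coefa; case: eqP => [_|_]; first by rewrite /dint mulr1 rpred_nat.
set N := Ntot m n; set kk := (N - k).-1.
have [a0 r0p s0p _] := qrepr (ha 0%N (leq0n _)).
have hs0 : ((qden (alpha 0%N))%:R : rat) != 0 by rewrite pnatr_eq0 -lt0n.
apply: dint_sum => l; rewrite mem_index_iota => /andP[kl lN] _.
pose G j := ((\prod_(p < (v_ alpha j).+1 | prime p && (p %| v_ alpha j)) p ^ nu p (n j))
        * \prod_(p < (r_ alpha j + (n 0 + 1) * s_ alpha j).+1
                   | prime p && ~~ (p %| s_ alpha j))
            p ^ Mp p (r_ alpha j + (n 0 + 1) * s_ alpha j))%N.
set s0 := qden (alpha 0%N) in a0 hs0 s0p *.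
set r0 := qnum (alpha 0%N) in a0 r0p *.
have bound : (1 * (s0 ^ (l - kk) * Kp s0 (l - kk)) * (s0 ^ (N - l - 1) * Kp s0 (N - l - 1))
    * \prod_(1 <= j < m.+1) (s0 ^ n j * G j) %| D1 m alpha n)%N.
  rewrite big_split /= -expn_sum -/(Ntot m n) -/N.
  have -> : (1 * (s0 ^ (l - kk) * Kp s0 (l - kk)) * (s0 ^ (N - l - 1) * Kp s0 (N - l - 1))
      * (s0 ^ N * \prod_(1 <= j < m.+1) G j)
      = s0 ^ ((l - kk) + (N - l - 1) + N) * (Kp s0 (l - kk) * Kp s0 (N - l - 1))
        * \prod_(1 <= j < m.+1) G j)%N by rewrite !expnD; ring.
  rewrite /D1 -/N; apply: dvdn_mul; last exact: dvdnn.
  apply: dvdn_mul; first by apply: dvdn_exp2l; lia.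
  rewrite /Kp -big_split /=; apply: dvdn_bigprod => p /andP[pp _].
  by rewrite -expnD dvdn_exp2l // nu_add //; lia.
apply: (dint_dvd bound).
apply: dint_mul; first apply: dint_mul; first apply: dint_mul.
- by apply: dint_int; rewrite rpredX // rpredN rpred1.
- have -> : alpha 0%N - 1 = (Posz r0 - Posz s0)%:~R / s0%:R + 0%N%:R.
    by rewrite a0 intrB !posz_intr addr0 mulrBl divff.
  exact: (@R1 (Posz r0 - Posz s0) s0 0 (l - kk) s0p).
- have -> : alpha 0%N + l.+1%:R = (Posz r0)%:~R / s0%:R + l.+1%:R.
    by rewrite a0 posz_intr.
  exact: R1.
- apply: dint_prod => j; rewrite mem_index_iota => /andP[j1 jm] _.
  have jm' : (j <= m)%N by [].
  have hj : (1 <= j <= m)%N by rewrite j1.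
  have aj0 := ha j jm'.
  have [aj rjp sjp crs] := qrepr aj0.
  have [uj ujp vjp cuv] := qrepr (addr_gt0 aj0 (ha 0%N (leq0n _))).
  set c := (n 0%N - n j + (i == j) + 1)%N.
  have e1 : alpha j + alpha 0%N + (n 0%N)%:R - (n j)%:R + (i == j)%:R + l%:R + 1
          = (u_ alpha j)%:R / (v_ alpha j)%:R + (c + l)%N%:R.
    rewrite /u_ /v_ -uj /c !natrD natrB ?hn0 //; ring.
  have e2 : alpha j + (n 0%N)%:R - (n j)%:R + (i == j)%:R + 1
          = (r_ alpha j)%:R / (s_ alpha j)%:R + c%:R.
    rewrite /r_ /s_ -aj /c !natrD natrB ?hn0 //; ring.
  rewrite e1 e2; apply: Cgen => //.
  + exact: (vdiv aj0 (ha 0%N (leq0n _))).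
  + move=> i' ilt; have := hn0 j hj; rewrite /c; case: (i == j) => /=; lia.
Qed.

Lemma ratio_dint m alpha n j t :
  (forall j, (j <= m)%N -> 0 < alpha j) ->
  (1 <= j <= m)%N -> (t <= Ntil m n)%N ->
  dint (D2 m alpha n) (poch (alpha j) t / poch (alpha j + alpha 0%N) t).
Proof.
move=> ha /andP[j1 jm] tN.
have aj0 := ha j jm.
have a00 := ha 0%N (leq0n _).
have [aj rjp sjp crs] := qrepr aj0.
have [uj ujp vjp cuv] := qrepr (addr_gt0 aj0 a00).
have vd := vdiv aj0 a00.
have [a0 r0p s0p _] := qrepr a00.
rewrite uj.
set u := qnum (alpha j + alpha 0%N) in ujp cuv *.
set v := qden (alpha j + alpha 0%N) in vjp cuv vd *.
rewrite aj /D2.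
apply: Rgen => //.
-
  have e : (d_ alpha j * v_ alpha j = s_ alpha 0 * s_ alpha j)%N by rewrite /d_ divnK.
  rewrite -(@dvdn_pmul2l (s_ alpha 0%N)) //.
  rewrite -e mulnA; apply: dvdn_mul => //.
  apply: dvdn_trans (_ : dlcm m alpha %| _)%N.
    by apply: dvdn_biglcm_nat; rewrite j1.
  rewrite /dtil -{1}(divnK (dvdn_gcdl (dlcm m alpha) (s_ alpha 0%N))) mulnC.
  by apply: dvdn_mul => //; apply: dvdn_gcdr.
- by apply: (@leq_bigmax_nat (u_ alpha)); rewrite j1.
- by apply: (@leq_bigmax_nat (v_ alpha)); rewrite j1.
- by apply: dvdn_biglcm_nat; rewrite j1.
- apply: biglcm_gt0 => i /andP[i1 im].
  by have [_ _ h _] := qrepr (ha i im).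
Qed.

Lemma coefc_dint m alpha n i j mu :
  (forall j, (j <= m)%N -> 0 < alpha j) ->
  (forall j, (1 <= j <= m)%N -> (0 < n j)%N) ->
  (forall j, (1 <= j <= m)%N -> (n j <= n 0)%N) ->
  (1 <= j <= m)%N -> (mu < (Ntil m n - n j + (i == j)).+1)%N ->
  dint (DN m alpha n) (coefc m alpha n i j mu).
Proof.
move=> ha hn hn0 hj hmu.
rewrite /coefc; apply: dint_sum => k _ _; apply: dint_mul.
  exact: coefa_dint.
apply: ratio_dint => //.
apply: leq_trans (leq_subr _ _) _.
have h3 : (n j <= Ntil m n)%N by rewrite /Ntil; apply: leq_trans (hn0 j hj) (leq_addl _ _).
have := hn j hj; move: hmu.
case: (i == j) => /= h1 h2; lia.
Qed.


End part8.

Unset Implicit Arguments. Set Strict Implicit. Set Printing Implicit Defensive.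
Local Open Scope ring_scope.

Theorem lemma4 (m : nat) (hm : (1 <= m)%N) (alpha : nat -> rat)
  (halpha : forall j, (j <= m)%N -> 0 < alpha j)
  (hdiff : forall i j, (1 <= i)%N -> (i < j)%N -> (j <= m)%N ->
             alpha i - alpha j \isn't a Num.int)
  (n : nat -> nat)
  (hn : forall j, (1 <= j <= m)%N -> (0 < n j)%N)
  (hn0 : forall j, (1 <= j <= m)%N -> (n j <= n 0)%N) :
  forall i, (i <= m)%N ->
    ((DN m alpha n)%:R *: Qpoly m alpha n i \is a polyOver Num.int)
    /\ (forall j, (1 <= j <= m)%N ->
          (DN m alpha n)%:R *: Ppoly m alpha n i j \is a polyOver Num.int).
Proof.
move=> i im; split.
  apply/polyOverP => k; rewrite coefZ coef_poly; case: ifP => _; last by rewrite mulr0 rpred0.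
  have := coefa_dint i k halpha hn hn0.
  by apply: dint_dvd; rewrite /DN dvdn_mulr.
move=> j hj; apply/polyOverP => mu; rewrite coefZ coef_poly; case: ifP => h; last by rewrite mulr0 rpred0.
exact: coefc_dint.
Qed.
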